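(* Let $(\mathcal{V},\mathcal{I})$ be a finite connected graph with vertex set $\mathcal{V}$ and set of unoriented edges $\mathcal{I}$ (each pair of vertices joined by at most one edge), with $N$ edges, each edge $(i,j)$ having length $L_{ij}>0$. Let $(S_i)_{i\in\mathcal{V}}$ satisfy $\sum_{i\in\mathcal{V}}S_i=0$, and let $\nu>0$ and $0<\gamma<1$. For a vector of conductivities $C=(C_{ij})\in\mathbb{R}^N_+$, let pressures $(P_i)_{i\in\mathcal{V}}$ solve the Kirchhoff law $$\sum_{j\in N(i)} C_{ij}\frac{P_i-P_j}{L_{ij}}=S_i\quad\text{for all }i\in\mathcal{V},$$ and define fluxes $Q_{ij}[C]=C_{ij}\frac{P_i-P_j}{L_{ij}}$, and the energy $$E[C]=\sum_{(i,j)\in\mathcal{I},\,i<j}\Big(\frac{Q_{ij}[C]^2}{C_{ij}}+\frac{\nu}{\gamma}C_{ij}^\gamma\Big)L_{ij}.$$ Then the global minimizer $C\in\mathbb{R}^N_+$ of $E$ constrained by the Kirchhoff law contains no loops, i.e., there exists no closed circle of edges $\{(i_1,i_2),(i_2,i_3),\dots,(i_K,i_1)\}\subset\mathcal{I}$ such that the fluxes $Q_{i_1i_2},Q_{i_2i_3},\dots,Q_{i_Ki_1}$ are all nonzero.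
   Context: $N(i)$ denotes the set of neighbours of vertex $i$. Fluxes are oriented: $Q_{ij}=-Q_{ji}$. The sum over $i<j$ counts each unoriented edge once. For a given $C$, the Kirchhoff system is solvable (uniquely up to an additive constant) when the graph formed by edges with positive conductivity is connected. *)

(* Defs.v *)
From HB Require Import structures.
From mathcomp Require Import all_boot all_order all_algebra.
From mathcomp Require Import reals exp.
Set Implicit Arguments. Unset Strict Implicit. Unset Printing Implicit Defensive.
Import Order.TTheory GRing.Theory Num.Theory.
Local Open Scope ring_scope.

(* Vertices are 'I_n; the graph is a symmetric irreflexive relation e.
   Conductivities C, lengths L are functions on pairs of vertices; only
   their values on edges matter. *)

Definition flux (R : realType) (n : nat) (L C : 'I_n -> 'I_n -> R)
  (P : 'I_n -> R) (i j : 'I_n) : R :=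
  C i j * (P i - P j) / L i j.

Definition kirchhoff (R : realType) (n : nat) (e : rel 'I_n)
  (L : 'I_n -> 'I_n -> R) (S : 'I_n -> R)
  (C : 'I_n -> 'I_n -> R) (P : 'I_n -> R) : Prop :=
  forall i : 'I_n, \sum_(j < n | e i j) flux L C P i j = S i.

(* Admissible (C, P): C is a nonnegative conductivity on the unoriented
   edges (symmetric) and P solves the Kirchhoff law for C. *)
Definition admissible (R : realType) (n : nat) (e : rel 'I_n)
  (L : 'I_n -> 'I_n -> R) (S : 'I_n -> R)
  (C : 'I_n -> 'I_n -> R) (P : 'I_n -> R) : Prop :=
  [/\ forall i j, e i j -> 0 <= C i j,
      forall i j, C i j = C j i &
      kirchhoff e L S C P].

(* Energy E[C] = sum_{(i,j) edge, i<j} (Q_ij^2 / C_ij + nu/gamma C_ij^gamma) L_ij.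
   Convention: x / 0 = 0 in MathComp (when C_ij = 0 the flux is 0 too). *)
Definition energy (R : realType) (n : nat) (e : rel 'I_n)
  (L : 'I_n -> 'I_n -> R) (nu gamma : R)
  (C : 'I_n -> 'I_n -> R) (P : 'I_n -> R) : R :=
  \sum_(i < n) \sum_(j < n | (i < j)%N && e i j)
     ((flux L C P i j) ^+ 2 / C i j + nu / gamma * powR (C i j) gamma) * L i j.

(* Main.v *)
Require Import Defs.
From HB Require Import structures.
From mathcomp Require Import all_boot all_order all_algebra.
From mathcomp Require Import reals exp.
From mathcomp Require Import ring lra.
Import Order.TTheory GRing.Theory Num.Theory.
Local Open Scope ring_scope.
Lemma ln_lt_sub1 {R : realType} (y : R) : 0 < y -> y != 1 -> ln y < y - 1.
Proof.
move=> y0 y1; have h : ln y != 0 by rewrite ln_eq0.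
have := expR_gt1Dx h; rewrite lnK ?posrE //; lra.
Qed.

Lemma ln_le_sub1 {R : realType} (y : R) : 0 < y -> ln y <= y - 1.
Proof.
move=> y0; have := expR_ge1Dx (ln y); rewrite lnK ?posrE //; lra.
Qed.

Lemma bern {R : realType} (g x : R) : 0 < g -> g < 1 -> -1 < x -> x != 0 ->
  powR (1 + x) g < 1 + g * x.
Proof.
move=> g0 g1 x1 x0.
have a0 : 0 < 1 + x by lra.
have m0 : 0 < 1 + g * x by nra.
have am : (1 + x) / (1 + g * x) != 1.
  apply/negP => /eqP h.
  have h2 : 1 + x = 1 + g * x by rewrite -(divfK (lt0r_neq0 m0) (1 + x)) h mul1r.
  have : (1 - g) * x = 0 by lra.
  by move/eqP; rewrite mulf_eq0 (negbTE x0) orbF; lra.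
have u0 : 0 < (1 + x) / (1 + g * x) by rewrite divr_gt0.
have v0 : 0 < (1 + g * x)^-1 by rewrite invr_gt0.
have h1 := @ln_lt_sub1 _ _ u0 am.
have h2 := @ln_le_sub1 _ _ v0.
rewrite ln_div ?posrE // in h1.
rewrite lnV ?posrE // in h2.
have key : g * ((1 + x) / (1 + g * x) - 1) + (1 - g) * ((1 + g * x)^-1 - 1) = 0.
  by field; rewrite gt_eqF.
have : g * ln (1 + x) < ln (1 + g * x) by nra.
rewrite /powR gt_eqF // -ltr_expR lnK ?posrE //.
Qed.
Lemma pow_pair {R : realType} (g x : R) : 0 < g -> g < 1 -> `|x| < 1 ->
  powR (1 + x) g + powR (1 - x) g <= 2 /\
  (x != 0 -> powR (1 + x) g + powR (1 - x) g < 2).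
Proof.
move=> g0 g1 hx.
have hx' : -1 < x < 1 by rewrite -ltr_norml.
case/andP: hx' => hx1 hx2.
have S : x != 0 -> powR (1 + x) g + powR (1 - x) g < 2.
  move=> x0; have := @bern _ g x g0 g1 hx1 x0.
  have hx3 : -1 < -x by lra.
  have x0' : -x != 0 by rewrite oppr_eq0.
  have := @bern _ g (-x) g0 g1 hx3 x0'; lra.
split => //; have [->|x0] := eqVneq x 0; last by apply/ltW/S.
by rewrite subr0 addr0 powR1; lra.
Qed.

Definition Tm {R : realType} (nu g c q l y : R) :=
  (((1 + y) * q) ^+ 2 / (c * (1 + y)) + nu / g * powR (c * (1 + y)) g) * l.

Lemma term_ineq {R : realType} (nu g c q l x : R) : 0 < nu -> 0 < g -> g < 1 ->
  0 <= c -> 0 < l -> `|x| < 1 -> (c = 0 -> q = 0) ->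
  Tm nu g c q l x + Tm nu g c q l (- x) <= 2 * ((q ^+ 2 / c + nu / g * powR c g) * l) /\
  (0 < c -> x != 0 ->
   Tm nu g c q l x + Tm nu g c q l (- x) < 2 * ((q ^+ 2 / c + nu / g * powR c g) * l)).
Proof.
move=> nu0 g0 g1 c0 l0 hx cq.
have [PP PS] := @pow_pair _ g x g0 g1 hx.
have hx' : -1 < x < 1 by rewrite -ltr_norml.
case/andP: hx' => hx1 hx2.
have [c00|cpos] := eqVneq c 0.
  rewrite /Tm c00 (cq c00) !mul0r !mulr0 !expr0n /= !mul0r !add0r.
  by split => //; [lra | rewrite ltxx].
have cp : 0 < c by rewrite lt0r cpos.
have e1 : forall y, 0 < 1 + y -> Tm nu g c q l y =
    ((1 + y) * (q ^+ 2 / c) + nu / g * powR c g * powR (1 + y) g) * l.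
  move=> y y0; rewrite /Tm powRM ?(ltW cp) ?(ltW y0) //; congr ((_ + _) * _).
    by field; rewrite !lt0r_neq0.
  by rewrite mulrA.
rewrite e1 ?e1; try lra.
have B0 : 0 < nu / g * powR c g by rewrite mulr_gt0 ?divr_gt0 ?powR_gt0.
set A := q ^+ 2 / c; set B := nu / g * powR c g.
set p1 := powR (1 + x) g; set p2 := powR (1 + - x) g.
have -> : 1 + - x = 1 - x by [].
split.
  have : B * (p1 + p2) <= B * 2 by rewrite ler_pM2l.
  move=> h; nra.
move=> _ x0; have : B * (p1 + p2) < B * 2 by rewrite ltr_pM2l // PS.
move=> h; nra.
Qed.
Lemma dsum_lt {R : realType} (n : nat) (F G : 'I_n -> 'I_n -> R)
  (PP : 'I_n -> 'I_n -> bool) i0 j0 : PP i0 j0 ->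
  (forall i j, PP i j -> F i j <= G i j) -> F i0 j0 < G i0 j0 ->
  \sum_(i < n) \sum_(j < n | PP i j) F i j < \sum_(i < n) \sum_(j < n | PP i j) G i j.
Proof.
move=> P0 le lt.
rewrite (bigD1 i0) //= [X in _ < X](bigD1 i0) //=.
apply: ltr_leD.
  rewrite (bigD1 j0) //= [X in _ < X](bigD1 j0) //=.
  apply: ltr_leD => //; apply: ler_sum => j /andP[hj _]; exact: le.
apply: ler_sum => i _; apply: ler_sum => j hj; exact: le.
Qed.

Lemma term_le {R : realType} (n : nat) (F : 'I_n -> R) k :
  (forall i, 0 <= F i) -> F k <= \sum_(i < n) F i.
Proof.
by move=> h; rewrite (bigD1 k) //= lerDl sumr_ge0.
Qed.

Lemma sum_ind {R : realType} (n : nat) (e : rel 'I_n) i k (b : bool) :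
  (b -> e i k) -> \sum_(j < n | e i j) ((b && (j == k))%:R : R) = b%:R.
Proof.
case: b => /= h.
  rewrite (bigD1 k) ?h //= eqxx big1 ?addr0 // => j /andP[_ /negbTE ->] //.
by rewrite big1.
Qed.

Theorem theorem2p2 (R : realType) (n : nat) (e : rel 'I_n)
  (L : 'I_n -> 'I_n -> R) (S : 'I_n -> R) (nu gamma : R)
  (e_sym : symmetric e) (e_irr : irreflexive e)
  (e_conn : forall x y : 'I_n, connect e x y)
  (L_sym : forall i j, L i j = L j i)
  (L_pos : forall i j, e i j -> 0 < L i j)
  (S_sum : \sum_(i < n) S i = 0)
  (nu_pos : 0 < nu) (gamma_pos : 0 < gamma) (gamma_lt1 : gamma < 1)
  (C : 'I_n -> 'I_n -> R) (P : 'I_n -> R)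
  (adm : admissible e L S C P)
  (glob_min : forall (C' : 'I_n -> 'I_n -> R) (P' : 'I_n -> R),
      admissible e L S C' P' ->
      energy e L nu gamma C P <= energy e L nu gamma C' P') :
  ~ exists s : seq 'I_n,
      [/\ uniq s, (3 <= size s)%N, cycle e s &
          cycle (fun i j => flux L C P i j != 0) s].
Proof.
move=> [s [us ss ce cf]].
case: adm => Cnn Csym kir.
have QA : forall i j, flux L C P j i = - flux L C P i j.
  by move=> i j; rewrite /flux Csym L_sym; ring.
have QC : forall i j, C i j = 0 -> flux L C P i j = 0.
  by move=> i j h; rewrite /flux h !mul0r.
pose sig i j : R := ((i \in s) && (j == next s i))%:R - ((i \in s) && (j == prev s i))%:R.
have NP : forall i j, (i \in s) && (j == next s i) = (j \in s) && (i == prev s j).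
  move=> i j; apply/idP/idP.
    by case/andP=> hs /eqP ->; rewrite mem_next hs prev_next // eqxx.
  by case/andP=> js /eqP ->; rewrite mem_prev js next_prev // eqxx.
have sigA : forall i j, sig j i = - sig i j.
  by move=> i j; rewrite /sig (NP j i) -(NP i j) opprB.
have sigQ : forall i j, sig i j != 0 -> flux L C P i j != 0.
  move=> i j; rewrite /sig.
  case: (boolP ((i \in s) && (j == next s i))) => [/andP[hs /eqP ->] _|_].
    exact: (next_cycle cf hs).
  case: (boolP ((i \in s) && (j == prev s i))) => [/andP[hs /eqP ->] _|_].
    by rewrite -oppr_eq0 -QA; exact: (prev_cycle cf hs).
  by rewrite subrr eqxx.
pose a i j := sig i j / flux L C P i j.
have aA : forall i j, a j i = a i j.
  by move=> i j; rewrite /a sigA QA invrN mulrNN.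
have aQ : forall i j, a i j * flux L C P i j = sig i j.
  move=> i j; rewrite /a; have [h|h] := eqVneq (flux L C P i j) 0.
    rewrite h mulr0; case: (eqVneq (sig i j) 0) => // /sigQ.
    by rewrite h eqxx.
  by rewrite divfK.
have sumsig : forall i, \sum_(j < n | e i j) sig i j = 0.
  move=> i; rewrite /sig sumrB (@sum_ind _ _ e i (next s i)); last first.
    by move=> hs; exact: (next_cycle ce hs).
  rewrite (@sum_ind _ _ e i (prev s i)) ?subrr // => hs.
  by rewrite e_sym; exact: (prev_cycle ce hs).
pose M := 1 + \sum_(i < n) \sum_(j < n) `|a i j|.
have aM : forall i j, `|a i j| <= M - 1.
  move=> i j; rewrite /M addrAC subrr add0r.
  apply: (le_trans (@term_le _ _ (fun j => `|a i j|) j _)) => [k|]; first exact: normr_ge0.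
  apply: (@term_le _ _ (fun i => \sum_(j < n) `|a i j|) i) => k.
  by apply: sumr_ge0.
have M1 : 1 <= M.
  by rewrite /M lerDl; apply: sumr_ge0 => i _; apply: sumr_ge0.
pose t := (2 * M)^-1.
have t0 : 0 < t by rewrite invr_gt0; lra.
have tM : t * (2 * M) = 1 by rewrite mulVf //; lra.
have at1 : forall i j, `|a i j * t| < 1.
  move=> i j; rewrite normrM (gtr0_norm t0).
  have := aM i j; nra.
have atN1 : forall i j, `|a i j * - t| < 1 by move=> i j; rewrite mulrN normrN.
pose Cp (tt : R) i j := C i j * (1 + a i j * tt).
have fluxCp : forall tt i j, flux L (Cp tt) P i j = (1 + a i j * tt) * flux L C P i j.
  by move=> tt i j; rewrite /flux /Cp; ring.
have admC : forall tt, (forall i j, `|a i j * tt| < 1) -> admissible e L S (Cp tt) P.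
  move=> tt htt; split.
  - move=> i j eij; rewrite /Cp mulr_ge0 ?Cnn //.
    by have := htt i j; rewrite ltr_norml; lra.
  - by move=> i j; rewrite /Cp Csym aA.
  - move=> i; under eq_bigr => j _ do rewrite fluxCp mulrDl mul1r mulrAC aQ.
    by rewrite big_split /= kir -mulr_suml sumsig mul0r addr0.
have EE : forall tt, energy e L nu gamma (Cp tt) P =
   \sum_(i < n) \sum_(j < n | (i < j)%N && e i j)
     Tm nu gamma (C i j) (flux L C P i j) (L i j) (a i j * tt).
  move=> tt; apply: eq_bigr => i _; apply: eq_bigr => j _.
  by rewrite fluxCp /Tm /Cp.
have E1 := glob_min _ _ (admC t (at1)).
have E2 := glob_min _ _ (admC (- t) (atN1)).
have [x0 [x1 [x2 [r Es]]]] : exists x0 x1 x2 r, s = [:: x0, x1, x2 & r].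
  by case: s ss {us ce cf NP sigA sigQ sumsig aQ aA a sig E1 E2 M aM M1 t t0 tM at1 atN1 Cp fluxCp admC EE} => [|y0 [|y1 [|y2 r]]] //= _; exists y0, y1, y2, r.
have [h01 h02 h12] : [/\ x1 != x0, x2 != x0 & x1 != x2].
  move: us; rewrite Es /= !inE => /andP[/norP[h01 /norP[h02 _]] /andP[/norP[h12 _] _]].
  by split; rewrite // eq_sym.
have x1s : x1 \in s by rewrite Es !inE eqxx orbT.
have nx : next s x1 = x2 by rewrite Es /= (negbTE h01) eqxx.
have px : prev s x1 = x0 by rewrite Es /= eqxx.
have s12 : sig x1 x2 = 1 by rewrite /sig x1s nx px eqxx (negbTE h02) /= subr0.
have Q12 : flux L C P x1 x2 != 0 by apply: sigQ; rewrite s12 oner_eq0.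
have a12 : a x1 x2 * t != 0.
  by rewrite mulf_neq0 ?(lt0r_neq0 t0) // /a s12 mul1r invr_eq0.
have e12 : e x1 x2 by rewrite -nx; exact: (next_cycle ce x1s).
have C12 : 0 < C x1 x2.
  rewrite lt0r Cnn // andbT; apply: contra Q12 => /eqP h; apply/eqP; exact: QC.
have LT : energy e L nu gamma (Cp t) P + energy e L nu gamma (Cp (- t)) P <
          2 * energy e L nu gamma C P.
  rewrite !EE -big_split /energy big_distrr.
  under eq_bigr => i _ do rewrite -big_split.
  under [X in _ < X]eq_bigr => i _ do rewrite big_distrr.
  have gen : forall i j : 'I_n, (i < j)%N && e i j ->
     Tm nu gamma (C i j) (flux L C P i j) (L i j) (a i j * t) +
     Tm nu gamma (C i j) (flux L C P i j) (L i j) (a i j * - t) <=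
     2 * (((flux L C P i j) ^+ 2 / C i j + nu / gamma * powR (C i j) gamma) * L i j) /\
     (0 < C i j -> a i j * t != 0 ->
     Tm nu gamma (C i j) (flux L C P i j) (L i j) (a i j * t) +
     Tm nu gamma (C i j) (flux L C P i j) (L i j) (a i j * - t) <
     2 * (((flux L C P i j) ^+ 2 / C i j + nu / gamma * powR (C i j) gamma) * L i j)).
    move=> i j /andP[_ eij]; rewrite mulrN.
    apply: term_ineq => //; [exact: Cnn | exact: L_pos | exact: QC].
  have [lt12|lt21|eq12] := ltngtP x1 x2.
  - apply: (@dsum_lt _ _ _ _ _ x1 x2); first by rewrite lt12 e12.
      by move=> i j h; case: (gen i j h).
    by case: (gen x1 x2 _) => [|_ ->] //; rewrite lt12 e12.
  - apply: (@dsum_lt _ _ _ _ _ x2 x1); first by rewrite lt21 e_sym e12.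
      by move=> i j h; case: (gen i j h).
    case: (gen x2 x1 _) => [|_ ->] //; first by rewrite lt21 e_sym e12.
      by rewrite Csym.
    by rewrite aA.
  - by move/eqP: h12; case; apply: val_inj.
lra.
Qed.
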